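(* Let $k\ge 1$, let $A$ be a set of integers, each at least $3$, and let $O_k$ be the set of odd integers less than $2k+1$. Then, as $n\to\infty$, $$ex(n,C_{2k+1},\mathcal C_A)=\Theta\big(ex(n,C_{2k+1},\mathcal C_{A\setminus O_k})\big).$$
   Context: $C_k$ denotes the cycle with $k$ vertices; for a set $B$ of integers each at least 3, $\mathcal C_B=\{C_b:b\in B\}$. For a graph $H$ and a family of graphs $\mathcal F$, $ex(n,H,\mathcal F)$ is the maximum number of subgraphs isomorphic to $H$ in an $n$-vertex graph containing no member of $\mathcal F$ as a subgraph. *)

(* Defs.v *)
From mathcomp Require Import all_boot.
Set Implicit Arguments. Unset Strict Implicit. Unset Printing Implicit Defensive.

(* A simple graph on the vertex set 'I_n is encoded by an arbitrary
   g : {ffun 'I_n * 'I_n -> bool}; the edge relation is the symmetric,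
   irreflexive closure below.  Every simple graph arises this way. *)
Definition graph (n : nat) := {ffun 'I_n * 'I_n -> bool}.

Definition adj n (g : graph n) (x y : 'I_n) : bool :=
  (x != y) && (g (x, y) || g (y, x)).

Definition cycle_map n m (g : graph n) (f : {ffun 'I_m -> 'I_n}) : bool :=
  injectiveb f && [forall i : 'I_m, adj g (f i) (f (ordS i))].

Definition has_cycle n (g : graph n) (m : nat) : bool :=
  [exists f : {ffun 'I_m -> 'I_n}, cycle_map g f].

(* number of subgraphs of g isomorphic to C_m (m >= 3): the number of
   injective cyclic traversals divided by |Aut C_m| = 2m *)
Definition num_cycles n (g : graph n) (m : nat) : nat :=
  #|[set f : {ffun 'I_m -> 'I_n} | cycle_map g f]| %/ (2 * m).

(* g contains no member of C_B = {C_b : b in B}.  Cycles longer than n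
   cannot occur in an n-vertex graph, so it suffices to check b <= n. *)
Definition cycles_free n (g : graph n) (B : pred nat) : bool :=
  [forall b : 'I_n.+1, (nat_of_ord b \in B) ==> ~~ has_cycle g b].

Definition ex_cyc (n m : nat) (B : pred nat) : nat :=
  \max_(g : graph n | cycles_free g B) num_cycles g m.

Definition odd_below (k : nat) : pred nat := fun b => odd b && (b < k.*2.+1).

Definition setDpred (A O : pred nat) : pred nat := fun b => A b && ~~ O b.

Definition bigTheta (f g : nat -> nat) : Prop :=
  exists (C N : nat), forall n, N <= n -> f n <= C * g n /\ g n <= C * f n.

(* Main.v *)
Require Import Defs.
From mathcomp Require Import all_boot all_algebra.
From mathcomp Require Import zify.
Require Import Defs.
Set Implicit Arguments. Unset Strict Implicit. Unset Printing Implicit Defensive.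

Lemma adjC n (g : graph n) x y : adj g x y = adj g y x.
Proof. by rewrite /adj eq_sym orbC. Qed.

Definition recolor n m (g : graph n) (c : {ffun 'I_n -> 'I_m}) : graph n :=
  [ffun p : 'I_n * 'I_n => adj g p.1 p.2 &&
     ((c p.2 == ordS (c p.1)) || (c p.1 == ordS (c p.2)))].

Lemma adj_recolor n m (g : graph n) (c : {ffun 'I_n -> 'I_m}) x y :
  adj (recolor g c) x y =
  adj g x y && ((c y == ordS (c x)) || (c x == ordS (c y))).
Proof.
rewrite /adj !ffunE /adj /= [y == x]eq_sym.
case: (x == y) => //=; case: (g (x,y)); case: (g (y,x));
  case: (c y == _); case: (c x == _) => //.
Qed.

Lemma cycle_recolor n m (g : graph n) (c : {ffun 'I_n -> 'I_m}) l
  (f : {ffun 'I_l -> 'I_n}) : cycle_map (recolor g c) f -> cycle_map g f.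
Proof.
case/andP=> Hi /forallP H; apply/andP; split=> //; apply/forallP=> i.
by have := H i; rewrite adj_recolor => /andP[].
Qed.

Lemma sum_bool_le l (b : 'I_l -> bool) : \sum_i (b i : nat) <= l.
Proof.
rewrite -[X in _ <= X]card_ord -sum1_card; apply: leq_sum => i _; by case: (b i).
Qed.

Lemma recolor_odd n m (g : graph n) (c : {ffun 'I_n -> 'I_m}) l :
  odd l -> l < m -> ~~ has_cycle (recolor g c) l.
Proof.
move=> Hodd Hlm; apply/negP => /existsP [f /andP [_ /forallP H]].
pose a i := nat_of_ord (c (f i)).
pose u i := c (f (ordS i)) == ordS (c (f i)).
have key : forall i, (a (ordS i) + ~~ u i) = (a i + u i) %[mod m].
  move=> i; have := H i; rewrite adj_recolor => /andP [_].
  rewrite /u /a; case: eqP => [-> _ | _ /= /eqP E].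
  - by rewrite /ordS /= addn0 addn1 modn_mod.
  - by rewrite E /ordS /= addn0 addn1 modn_mod.
have Hsum : \sum_i (a (ordS i) + ~~ u i) = \sum_i (a i + u i) %[mod m].
  rewrite -[LHS]modn_summ -[RHS]modn_summ; congr (_ %% _).
  by apply: eq_bigr => i _; exact: key.
have Hre : \sum_i a (ordS i) = \sum_i a i.
  by rewrite [RHS](reindex_inj (@ordS_inj l)).
move: Hsum; rewrite !big_split /= Hre => /eqP; rewrite eqn_modDl.
rewrite !modn_small; last 2 first.
- exact: leq_ltn_trans (sum_bool_le _) Hlm.
- exact: leq_ltn_trans (sum_bool_le (fun i => ~~ u i)) Hlm.
move=> /eqP EDU.
have HUD : \sum_i (u i : nat) + \sum_i (~~ u i : nat) = l.
  rewrite -big_split /= -[X in _ = X]card_ord -sum1_card.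
  by apply: eq_bigr => i _; case: (u i).
by rewrite -HUD EDU addnn odd_double in Hodd.
Qed.

Lemma count_col n m (g : graph n) (f : {ffun 'I_m -> 'I_n}) : cycle_map g f ->
  m ^ n <= #|[set c : {ffun 'I_n -> 'I_m} | cycle_map (recolor g c) f]| * m ^ m.
Proof.
case/andP => /injectiveP Hinj Hadj.
pose Psi (c : {ffun 'I_n -> 'I_m}) : {ffun 'I_n -> 'I_m} :=
  [ffun x => if [pick i | f i == x] is Some i then i else c x].
have PsiE c i : Psi c (f i) = i.
  rewrite ffunE; case: pickP => [j /eqP /Hinj -> //| /(_ i)]; by rewrite eqxx.
pose h c := (Psi c, [ffun i => c (f i)]).
have hinj : injective h.
  move=> c1 c2 [E1 E2]; apply/ffunP => x.
  move/ffunP: E1 => /(_ x); rewrite /Psi !ffunE.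
  case: pickP => [i /eqP <- _ | _ -> //].
  by move/ffunP: E2 => /(_ i); rewrite !ffunE => ->.
set G := [set c | _].
have sub : [set h c | c in [set: {ffun 'I_n -> 'I_m}]] \subset
           setX G [set: {ffun 'I_m -> 'I_m}].
  apply/subsetP => _ /imsetP [c _ ->]; rewrite inE /= in_setT andbT inE.
  rewrite /cycle_map; apply/andP; split; first by apply/injectiveP.
  apply/forallP => i; rewrite adj_recolor !PsiE eqxx andbT; exact: (forallP Hadj i).
have := subset_leq_card sub.
by rewrite card_imset // cardsX !cardsT !card_ffun !card_ord.
Qed.

Lemma good_coloring n m (g : graph n) : 0 < m -> exists c : {ffun 'I_n -> 'I_m},
  #|[set f : {ffun 'I_m -> 'I_n} | cycle_map g f]| <=
    m ^ m * #|[set f : {ffun 'I_m -> 'I_n} | cycle_map (recolor g c) f]|.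
Proof.
move=> m0.
have T0 : 0 < #|{ffun 'I_n -> 'I_m}| by rewrite card_ffun card_ord expn_gt0 m0.
have [c0 Hc0] := eq_bigmax (fun c : {ffun 'I_n -> 'I_m} =>
   #|[set f : {ffun 'I_m -> 'I_n} | cycle_map (recolor g c) f]|) T0.
exists c0; rewrite -Hc0.
set M := \max_c _.
have mn0 : 0 < m ^ n by rewrite expn_gt0 m0.
have mm0 : 0 < m ^ m by rewrite expn_gt0 m0.
rewrite -(leq_pmul2r mn0).
rewrite -sum_nat_const.
apply: leq_trans (_ : \sum_(f in [set f | cycle_map g f])
   (#|[set c : {ffun 'I_n -> 'I_m} | cycle_map (recolor g c) f]| * m ^ m) <= _).
  by apply: leq_sum => f; rewrite inE => Hf; apply: count_col.
rewrite -big_distrl /= -mulnA [X in _ <= X]mulnC leq_pmul2r //.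
have E1 (f : {ffun 'I_m -> 'I_n}) : #|[set c : {ffun 'I_n -> 'I_m} | cycle_map (recolor g c) f]| =
            \sum_(c : {ffun 'I_n -> 'I_m}) (cycle_map (recolor g c) f : nat).
  have -> : \sum_(c : {ffun 'I_n -> 'I_m}) (cycle_map (recolor g c) f : nat) = \sum_(c : {ffun 'I_n -> 'I_m}) (if c \in [set c : {ffun 'I_n -> 'I_m} | cycle_map (recolor g c) f] then 1 else 0).
    by apply: eq_bigr => c _; rewrite inE; case: (cycle_map _ f).
  by rewrite -big_mkcond sum1_card.
rewrite (eq_bigr _ (fun f _ => E1 f)).
rewrite exchange_big /=.
apply: (@leq_trans (\sum_(c : {ffun 'I_n -> 'I_m}) M)); last first.
  by rewrite sum_nat_const card_ffun !card_ord mulnC.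
apply: leq_sum => c _.
apply: leq_trans (leq_bigmax c).
rewrite -sum1_card big_mkcond [X in _ <= X]big_mkcond /=.
apply: leq_sum => f _; rewrite !inE.
by case: (cycle_map g f); case: (cycle_map (recolor g c) f).
Qed.

Import GRing.Theory.

Lemma cycles_ge2m n m (g : graph n) (f : {ffun 'I_m -> 'I_n}) : 3 <= m ->
  cycle_map g f -> 2 * m <= #|[set f : {ffun 'I_m -> 'I_n} | cycle_map g f]|.
Proof.
case: m f => [|[|[|p]]] // f _ /andP [/injectiveP Hinj /forallP Hadj].
have oS (i : 'I_p.+3) : ordS i = (i + 1)%R.
  by apply: val_inj => /=; rewrite modnDmr addn1.
pose h (x : 'I_p.+3 * bool) : {ffun 'I_p.+3 -> 'I_n} :=
  [ffun i => f (if x.2 then (x.1 + i)%R else (x.1 - i)%R)].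
have two : (1 + 1 : 'I_p.+3)%R != 0%R.
  apply/eqP => /(congr1 val) /=; rewrite !modn_small //.
have hinj : injective h.
  move=> [j1 b1] [j2 b2] E.
  have E0 : h (j1, b1) 0%R = h (j2, b2) 0%R by rewrite E.
  rewrite /h /= !ffunE in E0.
  have E1 : h (j1, b1) 1%R = h (j2, b2) 1%R by rewrite E.
  rewrite /h /= !ffunE in E1.
  clear E; case: b1 b2 E0 E1 => [] [] /= /Hinj E0 /Hinj E1;
    rewrite ?addr0 ?subr0 in E0; subst j2 => //.
  - move/addrI/eqP: E1; rewrite -addr_eq0 => /eqP E2; by rewrite E2 eqxx in two.
  - move/esym/addrI/eqP: E1; rewrite -addr_eq0 => /eqP E2; by rewrite E2 eqxx in two.
have sub : [set h x | x in [set: 'I_p.+3 * bool]] \subset [set f | cycle_map g f].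
  apply/subsetP => _ /imsetP [[j b] _ ->]; rewrite inE /cycle_map.
  apply/andP; split.
    apply/injectiveP => i1 i2; rewrite /h !ffunE /=; case: b => /Hinj.
    - exact: addrI.
    - by move/addrI/oppr_inj.
  apply/forallP => i; rewrite /h !ffunE /=; case: b.
  - by have := Hadj (j + i)%R; rewrite !oS addrA.
  - have := Hadj (j - (i + 1))%R; rewrite !oS adjC.
    by rewrite opprD addrA subrK.
have := subset_leq_card sub.
by rewrite card_imset // cardsT card_prod card_ord card_bool mulnC.
Qed.

Lemma div_ineq a b d M : 0 < d -> a <= M * b -> (b = 0 \/ d <= b) ->
  a %/ d <= (2 * d * M) * (b %/ d).
Proof.
move=> d0 Hab [b0 | Hdb].
  by move: Hab; rewrite b0 muln0 leqn0 => /eqP ->; rewrite div0n.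
have h1 := leq_div a d.
have h2 := ltn_ceil b d0.
have h3 : 0 < b %/ d by rewrite divn_gt0.
move: h1 h2 h3; set q := b %/ d; set r := a %/ d => h1 h2 h3.
nia.
Qed.

Lemma main_le k (A : pred nat) n :
  1 <= k ->
  ex_cyc n k.*2.+1 (setDpred A (odd_below k)) <=
  (2 * (2 * k.*2.+1) * k.*2.+1 ^ k.*2.+1) * ex_cyc n k.*2.+1 A.
Proof.
move=> k1; set m := k.*2.+1.
apply/bigmax_leqP => g Hg.
have [c Hc] := good_coloring g (ltn0Sn k.*2 : 0 < m).
have Hfree : cycles_free (recolor g c) A.
  apply/forallP => b; apply/implyP => Hb.
  case Ho: (odd_below k b).
  - by move: Ho => /andP [Hodd Hlt]; apply: recolor_odd.
  - apply/negP => /existsP [f Hf].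
    move/forallP: Hg => /(_ b) /implyP Hg.
    have : ~~ has_cycle g b.
      apply: Hg; rewrite unfold_in /setDpred; rewrite unfold_in in Hb.
      by rewrite Hb Ho.
    by move/negP; apply; apply/existsP; exists f; apply: cycle_recolor Hf.
apply: leq_trans (_ : _ <= (2 * (2 * m) * m ^ m) * num_cycles (recolor g c) m) _.
  rewrite /num_cycles; apply: div_ineq => //.
  set S := #|_|.
  case: (posnP S) => [-> | /card_gt0P [f]]; first by left.
  rewrite inE => Hf; right; apply: cycles_ge2m Hf; rewrite /m; lia.
by rewrite leq_mul2l; apply/orP; right; apply: leq_bigmax_cond.
Qed.

Theorem lemma2 (k : nat) (A : pred nat) :
  1 <= k ->
  (forall b, A b -> 3 <= b) ->
  bigTheta (fun n => ex_cyc n k.*2.+1 A)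
           (fun n => ex_cyc n k.*2.+1 (setDpred A (odd_below k))).
Proof.
move=> k1 HA.
exists (2 * (2 * k.*2.+1) * k.*2.+1 ^ k.*2.+1), 0 => n _; split; last exact: main_le.
apply: (@leq_trans (ex_cyc n k.*2.+1 (setDpred A (odd_below k)))); last first.
  by apply: leq_pmull; rewrite !muln_gt0 expn_gt0.
apply/bigmax_leqP => g Hg; apply: leq_bigmax_cond.
apply/forallP => b; apply/implyP => Hb; move/forallP: Hg => /(_ b) /implyP; apply.
move: Hb; rewrite !unfold_in /setDpred => /andP [].
done.
Qed.
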